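(* Let $n\ge 2$ and $t\ge 2$ be integers. Then there exists a constant $c>0$, depending only on $n$ and $t$, such that for every sufficiently large integer $q$ there exists a $t$-MIPPC$(n,q)$ of size at least $c\,q^{\frac{tn}{2t-1}}$; that is, $M_t(n,q)\ge c\,q^{\frac{tn}{2t-1}}$.
   Context: Let $Q$ be an alphabet with $|Q|=q$. An $(n,q)$ code is a subset $\mathcal{C}\subseteq Q^n$. For $\mathcal{S}\subseteq Q^n$ and $1\le i\le n$ let $\mathcal{S}(i)=\{\mathbf{c}(i):\mathbf{c}\in\mathcal{S}\}$, and let $\mathrm{desc}(\mathcal{S})=\mathcal{S}(1)\times\cdots\times\mathcal{S}(n)$. An $(n,q)$ code $\mathcal{C}$ is a $t$-MIPPC$(n,q)$ ($t$-identifiable parent property for multimedia fingerprinting) if for every nonempty $\mathcal{C}'\subseteq\mathcal{C}$ with $|\mathcal{C}'|\le t$ we have $\bigcap_{\mathcal{S}\in S_t(\mathcal{C}')}\mathcal{S}\neq\emptyset$, where $S_t(\mathcal{C}')=\{\mathcal{S}\subseteq\mathcal{C}: |\mathcal{S}|\le t,\ \mathrm{desc}(\mathcal{S})=\mathrm{desc}(\mathcal{C}')\}$. $M_t(n,q)$ denotes the maximum size $|\mathcal{C}|$ of a $t$-MIPPC$(n,q)$. *)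

(* Defs.v *)
From Stdlib Require Import Reals.
From mathcomp Require Import all_boot.
Set Implicit Arguments. Unset Strict Implicit. Unset Printing Implicit Defensive.

Definition word (n q : nat) := {ffun 'I_n -> 'I_q}.

Definition coord_set (n q : nat) (S : {set word n q}) (i : 'I_n) : {set 'I_q} :=
  [set (c : word n q) i | c in S].

Definition desc (n q : nat) (S : {set word n q}) : {set word n q} :=
  [set w : word n q | [forall i, w i \in coord_set S i]].

Definition St (n q t : nat) (C C' : {set word n q}) : {set {set word n q}} :=
  [set S : {set word n q} | [&& S \subset C, #|S| <= t & desc S == desc C']].

Definition is_MIPPC (n q t : nat) (C : {set word n q}) : Prop :=
  forall C' : {set word n q}, C' \subset C -> 0 < #|C'| -> #|C'| <= t ->
    \bigcap_(S in St t C C') S != set0.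

(* Main.v *)
Require Import Defs.
From Stdlib Require Import Reals Lra.
From mathcomp Require Import all_boot.
From mathcomp Require Import zify.
Set Implicit Arguments. Unset Strict Implicit. Unset Printing Implicit Defensive.

Lemma foldr_le (I : Type) (r : seq I) (h : I -> nat) s :
  (forall i, h i <= s) -> foldr muln 1 [seq h i | i <- r] <= s ^ size r.
Proof.
move=> hs; elim: r => [|x r IH] //=.
by rewrite expnS leq_mul.
Qed.

Lemma box_card n q (A : 'I_n -> {set 'I_q}) s :
  (forall i, #|A i| <= s) ->
  #|[set w : word n q | [forall i, w i \in A i]]| <= s ^ n.
Proof.
move=> hA.
have -> : #|[set w : word n q | [forall i, w i \in A i]]| = #|family (fun i => mem (A i))|.
  apply: eq_card => w; rewrite inE; apply/forallP/familyP => H i; exact: H.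
rewrite card_family.
have := @foldr_le _ (enum 'I_n) (fun i => #|mem (A i)|) s.
rewrite size_enum_ord; apply => i; exact: hA.
Qed.

Lemma bin_le_exp a b : 'C(a, b) <= a ^ b.
Proof.
elim: a b => [|a IH] [|b] //=.
rewrite binS expnS.
apply: leq_trans (leq_add (IH b.+1) (IH b)) _.
have h : a ^ b <= a.+1 ^ b by elim: b {IH} => // b IHb; rewrite !expnS leq_mul.
rewrite expnS; nia.
Qed.

Lemma card_bigcup_le (T I : finType) (P : pred I) (F : I -> {set T}) :
  #|\bigcup_(i | P i) F i| <= \sum_(i | P i) #|F i|.
Proof.
elim/big_rec2: _ => [|i U s _ H]; first by rewrite cards0.
rewrite cardsU; lia.
Qed.

Lemma small_sets_card q s : 0 < q ->
  #|[set X : {set 'I_q} | #|X| <= s]| <= s.+1 * q ^ s.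
Proof.
move=> q0.
have -> : [set X : {set 'I_q} | #|X| <= s] = \bigcup_(k < s.+1) [set X : {set 'I_q} | #|X| == k].
  apply/setP => X; rewrite !inE; apply/idP/bigcupP.
  - by move=> H; exists (Ordinal (n:=s.+1) (m:=#|X|) H) => //; rewrite inE.
  - by case=> k _; rewrite inE => /eqP ->; rewrite -ltnS.
apply: leq_trans (card_bigcup_le _ _) _.
apply: (@leq_trans (\sum_(k < s.+1) q ^ s)); last by rewrite sum_nat_const card_ord.
apply: leq_sum => k _; rewrite card_draws card_ord.
apply: leq_trans (bin_le_exp _ _) _.
by rewrite leq_pexp2l // -ltnS.
Qed.

Lemma expn_mono a b e : a <= b -> a ^ e <= b ^ e.
Proof. by move=> h; elim: e => // e IH; rewrite !expnS leq_mul. Qed.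

Lemma foldr_prod (s : seq nat) : foldr muln 1 s = \prod_(x <- s) x.
Proof. elim: s => [|x s IH]; first by rewrite big_nil. by rewrite big_cons /= IH. Qed.

Lemma card_fam M (T : finType) (B : {set T}) (J : {set 'I_M}) :
  #|[set f : {ffun 'I_M -> T} | [forall j in J, f j \in B]]|
  = #|B| ^ #|J| * #|T| ^ (M - #|J|).
Proof.
pose F := fun j : 'I_M => if j \in J then B else [set: T].
have -> : #|[set f : {ffun 'I_M -> T} | [forall j in J, f j \in B]]| = #|family F|.
  apply: eq_card => f; rewrite inE; apply/forall_inP/familyP => H j.
  - by rewrite /F; case: ifP => hj; [apply: H | rewrite inE].
  - by move=> hj; have := H j; rewrite /F hj.
rewrite card_family foldr_prod big_map big_enum /=.
rewrite (bigID (mem J)) /=.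
rewrite [X in X * _](eq_bigr (fun _ => #|B|)); last by move=> j hj; rewrite /F hj.
rewrite [X in _ * X](eq_bigr (fun _ => #|T|)); last by move=> j hj; rewrite /F (negbTE hj) cardsT.
rewrite !prod_nat_const.
congr (_ * _ ^ _).
have h := cardsC J; rewrite card_ord in h.
rewrite (eq_card (B := ~: J)); last by move=> i; rewrite !inE.
move: h; set a := #|J|; set b := #|~: J|; move=> h; lia.
Qed.

Lemma fiber2 M q (g : 'I_M -> 'I_q) (J : {set 'I_M}) :
  (forall j, j \in J -> exists2 j', j' \in J & (j' != j) && (g j' == g j)) ->
  2 * #|[set g j | j in J]| <= #|J|.
Proof.
move=> H.
rewrite -[X in _ <= X]sum1_card (partition_big g (mem [set g j | j in J])) /=; last by move=> j hj; apply: imset_f.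
rewrite mulnC -sum_nat_const.
apply: leq_sum => a /imsetP [j hj ->].
have [j' hj' /andP [ne eq]] := H j hj.
rewrite (eq_bigl (mem [set i in J | g i == g j])); last by move=> i; rewrite !inE.
rewrite sum1_card; apply/card_gt1P; exists j, j'; rewrite !inE hj hj' eq eqxx; split=> //.
by rewrite eq_sym.
Qed.

Definition badJ n q t L M (f : {ffun 'I_M -> word n q}) (J : {set 'I_M}) : bool :=
  [&& 1 < #|J|, #|J| <= L,
      [forall i : 'I_n, #|[set f j i | j in J]| <= t] &
      [forall j in J, forall i : 'I_n, exists j' in J, (j' != j) && (f j' i == f j i)]].

Lemma count_J n q t L M (J : {set 'I_M}) : 0 < q ->
  #|[set f : {ffun 'I_M -> word n q} | badJ t L f J]| <=
    ((minn t #|J|./2).+1 ^ n * q ^ (minn t #|J|./2 * n)) *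
      ((minn t #|J|./2) ^ n) ^ #|J| * (q ^ n) ^ (M - #|J|).
Proof.
move=> hq.
set s := minn t #|J|./2.
pose box (A : {ffun 'I_n -> {set 'I_q}}) := [set w : word n q | [forall i, w i \in A i]].
pose AF := [set A : {ffun 'I_n -> {set 'I_q}} | [forall i, #|A i| <= s]].
have sub : [set f : {ffun 'I_M -> word n q} | badJ t L f J] \subset
   \bigcup_(A in AF) [set f : {ffun 'I_M -> word n q} | [forall j in J, f j \in box A]].
  apply/subsetP => f; rewrite inE => /and4P [_ _ /forallP ht /forall_inP hw].
  apply/bigcupP; exists [ffun i => [set f j i | j in J]].
    rewrite inE; apply/forallP => i; rewrite ffunE leq_min ht /=.
    rewrite geq_half_double -mul2n; apply: fiber2 => j hj.
    by have /forallP /(_ i) /exists_inP [j' hj' H] := hw j hj; exists j'.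
  rewrite inE; apply/forall_inP => j hj; rewrite inE; apply/forallP => i.
  by rewrite ffunE; apply: imset_f.
apply: leq_trans (subset_leq_card sub) _.
apply: leq_trans (card_bigcup_le _ _) _.
apply: (@leq_trans (\sum_(A in AF) ((s ^ n) ^ #|J| * (q ^ n) ^ (M - #|J|)))).
  apply: leq_sum => A; rewrite inE => /forallP hA.
  rewrite card_fam card_ffun !card_ord.
  by apply: leq_mul => //; apply: expn_mono; apply: box_card.
rewrite sum_nat_const mulnA leq_mul2r leq_mul2r; apply/orP; right; apply/orP; right.
have -> : #|AF| = #|@ffun_on_mem 'I_n _ (mem [set X : {set 'I_q} | #|X| <= s])|.
  apply: eq_card => A; rewrite inE; apply/forallP/ffun_onP => H i.
  - by rewrite inE H.
  - by have := H i; rewrite inE.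
rewrite card_ffun_on card_ord mulnC expnM -expnMn.
by apply: expn_mono; rewrite mulnC; apply: small_sets_card.
Qed.

Lemma exp_ineq t m : 1 <= t -> 2 <= m ->
  t * (m - 1) + minn t m./2 * (2 * t - 1) <= m * (2 * t - 1).
Proof.
move=> ht hm.
have := odd_double_half m; set h := m./2; move=> hmh.
have : odd m <= 1 by case: odd.
move: (odd m) hmh => o hmh ho.
rewrite -muln2 in hmh.
clearbody h; subst m.
case: (leqP t h) => th.
- have e : minn t h = t by lia.
  move: e; set u := minn t h; move=> e; subst u. nia.
- have e : minn t h = h by lia.
  move: e; set u := minn t h; move=> e; nia.
Qed.

Lemma key n t E M q m : 1 <= t -> 2 <= m -> 0 < q -> 1 <= E ->
  (E * M) ^ (2 * t - 1) <= q ^ (t * n) ->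
  E * M ^ m * q ^ (minn t m./2 * n) <= M * (q ^ n) ^ m.
Proof.
move=> ht hm hq hE hX.
have := @exp_ineq t m ht hm.
set s := minn t m./2 => Hs.
case: M hX => [|M] hX; first by rewrite exp0n ?muln0 ?mul0n //; lia.
have Em : m = (m - 1).+1 by lia.
have h1 : E * M.+1 ^ (m - 1) <= (E * M.+1) ^ (m - 1).
  rewrite expnMn leq_mul2r; apply/orP; right.
  have -> : m - 1 = (m - 2).+1 by lia.
  by rewrite expnS leq_pmulr // expn_gt0 hE.
set X := E * M.+1 in hX h1.
have h2 : X ^ (m - 1) * q ^ (s * n) <= (q ^ n) ^ m.
  rewrite -(leq_exp2r _ _ (_ : 0 < 2 * t - 1)); last by lia.
  rewrite expnMn.
  have e1 : (X ^ (m - 1)) ^ (2 * t - 1) = (X ^ (2 * t - 1)) ^ (m - 1) by rewrite -!expnM mulnC.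
  rewrite e1.
  apply: leq_trans (leq_mul (@expn_mono _ _ (m - 1) hX) (leqnn _)) _.
  rewrite -!expnM -expnD leq_pexp2l //.
  nia.
have h3 : M.+1 ^ m = M.+1 * M.+1 ^ (m - 1) by rewrite {1}Em expnS.
rewrite h3.
move: h1 h2; set a := M.+1 ^ (m - 1); set b := X ^ (m - 1); set c := q ^ (s * n); set d := (q ^ n) ^ m.
move=> h1 h2.
have : E * a * c <= d by apply: leq_trans (leq_mul h1 (leqnn c)) h2.
nia.
Qed.

Lemma term_bound n t L M q m : 1 <= t -> 2 <= m -> m <= L -> 0 < q ->
  (2 * L.+1 * (t.+1 ^ n * t ^ (n * L)) * M) ^ (2 * t - 1) <= q ^ (t * n) ->
  2 * L.+1 * ('C(M, m) * (((minn t m./2).+1 ^ n * q ^ (minn t m./2 * n)) *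
      ((minn t m./2) ^ n) ^ m * (q ^ n) ^ (M - m))) <= M * (q ^ n) ^ M.
Proof.
move=> ht hm hmL hq hX.
case: (leqP m M) => hMm; last by rewrite bin_small // mul0n muln0.
set s := minn t m./2.
set E := 2 * L.+1 * (t.+1 ^ n * t ^ (n * L)).
have hE : 0 < E by rewrite /E !muln_gt0 !expn_gt0 ht.
have hk := key ht hm hq hE hX.
rewrite -/s in hk.
have hC : 'C(M, m) <= M ^ m by apply: bin_le_exp.
have hst : s <= t by apply: geq_minl.
have hs1 : s.+1 ^ n <= t.+1 ^ n by apply: expn_mono.
have hs2 : (s ^ n) ^ m <= t ^ (n * L).
  rewrite -expnM; apply: leq_trans (expn_mono _ hst) _.
  by rewrite leq_pexp2l // leq_mul2l hmL orbT.
have hQ : (q ^ n) ^ m * (q ^ n) ^ (M - m) = (q ^ n) ^ M by rewrite -expnD subnKC.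
apply: (@leq_trans (2 * L.+1 * (M ^ m * ((t.+1 ^ n * q ^ (s * n)) * t ^ (n * L) * (q ^ n) ^ (M - m))))).
  rewrite leq_mul2l; apply/orP; right.
  apply: leq_mul => //; apply: leq_mul => //; apply: leq_mul => //; apply: leq_mul => //.
have -> : 2 * L.+1 * (M ^ m * (t.+1 ^ n * q ^ (s * n) * t ^ (n * L) * (q ^ n) ^ (M - m)))
   = (E * M ^ m * q ^ (s * n)) * (q ^ n) ^ (M - m).
  rewrite /E. lia.
apply: leq_trans (leq_mul hk (leqnn _)) _.
by rewrite -mulnA hQ.
Qed.

Lemma card_sum (T : finType) (A : {set T}) : #|A| = \sum_x (x \in A : nat).
Proof. by rewrite -sum1_card big_mkcond; apply: eq_bigr => x _; case: (x \in A). Qed.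

Lemma sum_exchange n q t L M :
  \sum_(f : {ffun 'I_M -> word n q}) #|[set J | badJ t L f J]| =
  \sum_(J : {set 'I_M}) #|[set f : {ffun 'I_M -> word n q} | badJ t L f J]|.
Proof.
under eq_bigr => f _ do rewrite card_sum.
rewrite exchange_big /=.
by apply: eq_bigr => J _; rewrite card_sum; apply: eq_bigr => f _; rewrite !inE.
Qed.

Lemma total_bound n q t L M : 1 <= t -> 2 <= L -> 0 < q ->
  (2 * L.+1 * (t.+1 ^ n * t ^ (n * L)) * M) ^ (2 * t - 1) <= q ^ (t * n) ->
  2 * \sum_(f : {ffun 'I_M -> word n q}) #|[set J | badJ t L f J]| <= M * (q ^ n) ^ M.
Proof.
move=> ht hL hq hX.
rewrite sum_exchange.
set X := fun J : {set 'I_M} => #|[set f : {ffun 'I_M -> word n q} | badJ t L f J]|.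
have X0 : forall J : {set 'I_M}, ~~ ((1 < #|J|) && (#|J| <= L)) -> X J = 0.
  move=> J hJ; apply/eqP; rewrite cards_eq0; apply/eqP/setP => f; rewrite !inE /badJ.
  by case: (1 < #|J|) (#|J| <= L) hJ => [] [].
rewrite (bigID (fun J : {set 'I_M} => #|J| <= L)) /=.
rewrite [X in _ * (_ + X)]big1 ?addn0; last first.
  by move=> J hJ; apply: X0; rewrite (negbTE hJ) andbF.
rewrite (partition_big (fun J : {set 'I_M} => (inord #|J| : 'I_L.+1)) predT) //=.
have inner : forall m : 'I_L.+1,
    2 * L.+1 * (\sum_(J : {set 'I_M} | (#|J| <= L) && ((inord #|J| : 'I_L.+1) == m)) X J) <= M * (q ^ n) ^ M.
  move=> m.
  rewrite (eq_bigl (fun J : {set 'I_M} => #|J| == m)); last first.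
    move=> J; apply/andP/eqP.
    - by case=> hJ /eqP <-; rewrite inordK.
    - by move=> hJ; split; [rewrite hJ -ltnS | apply/eqP/val_inj; rewrite /= inordK hJ].
  case: (ltnP m 2) => hm.
    by rewrite big1 ?muln0 // => J /eqP hJ; apply: X0; rewrite hJ; case: (nat_of_ord m) hm => [|[]].
  apply: leq_trans (term_bound (M := M) ht hm (_ : m <= L) hq hX); last by rewrite -ltnS.
  rewrite leq_mul2l; apply/orP; right.
  apply: (@leq_trans (\sum_(J : {set 'I_M} | #|J| == m) 
     (((minn t m./2).+1 ^ n * q ^ (minn t m./2 * n)) *
      ((minn t m./2) ^ n) ^ m * (q ^ n) ^ (M - m)))).
    by apply: leq_sum => J /eqP hJ; rewrite /X -hJ count_J.
  rewrite sum_nat_const.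
  have -> : #|[pred J : {set 'I_M} | #|J| == m]| = 'C(M, m).
    by have := card_draws 'I_M m; rewrite card_ord => <-; apply: eq_card => J; rewrite !inE.
  by [].
rewrite -(leq_pmul2l (ltn0Sn L)).
apply: (@leq_trans (\sum_(m < L.+1) M * (q ^ n) ^ M)); last by rewrite sum_nat_const card_ord.
rewrite big_distrr /= big_distrr /=.
apply: leq_sum => m _; apply: leq_trans (inner m).
set u := \sum_(J : {set 'I_M} | _) _.
by rewrite mulnCA mulnA.
Qed.

Lemma exists_good_f n q t L M : 1 <= t -> 2 <= L -> 0 < q ->
  (2 * L.+1 * (t.+1 ^ n * t ^ (n * L)) * M) ^ (2 * t - 1) <= q ^ (t * n) ->
  exists f : {ffun 'I_M -> word n q}, 2 * #|[set J | badJ t L f J]| <= M.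
Proof.
move=> ht hL hq hX.
have tb := total_bound ht hL hq hX.
case: (pickP (fun f : {ffun 'I_M -> word n q} => 2 * #|[set J | badJ t L f J]| <= M)) => [f hf|hn].
  by exists f.
exfalso.
have : \sum_(f : {ffun 'I_M -> word n q}) M.+1 <= \sum_(f : {ffun 'I_M -> word n q}) 2 * #|[set J | badJ t L f J]|.
  by apply: leq_sum => f _; rewrite ltnNge hn.
rewrite sum_nat_const -big_distrr /= card_ffun card_ffun !card_ord.
have hp : 0 < (q ^ n) ^ M by rewrite !expn_gt0 hq.
move: tb hp; set S := \sum_(f : {ffun 'I_M -> word n q}) _; set P := (q ^ n) ^ M.
move=> tb hp h. nia.
Qed.

Lemma desc_self n q (S : {set word n q}) w : w \in S -> w \in desc S.
Proof. by move=> wS; rewrite inE; apply/forallP => i; apply: imset_f. Qed.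

Lemma desc_card n q t (S : {set word n q}) : #|S| <= t -> #|desc S| <= t ^ n.
Proof.
move=> hS; apply: box_card => i.
by apply: leq_trans (leq_imset_card _ _) hS.
Qed.

Lemma mippc_of n q t L M (f : {ffun 'I_M -> word n q}) (R : {set 'I_M}) :
  0 < n -> t ^ n <= L ->
  {in R &, injective f} ->
  (forall J : {set 'I_M}, J \subset R -> ~~ badJ t L f J) ->
  is_MIPPC t (f @: R).
Proof.
move=> hn hL inj noBad C' sub c0 ct.
set C := f @: R.
case: (boolP [exists c in C', exists i, [forall d in C,
          (d \in desc C') ==> (d i == c i) ==> (d == c)]]).
- case/exists_inP => c cC' /existsP [i /forall_inP hc].
  apply/set0Pn; exists c; apply/bigcapP => S; rewrite inE => /and3P [sS _ /eqP dS].
  have : c \in desc S by rewrite dS; apply: desc_self.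
  rewrite inE => /forallP /(_ i) /imsetP [d dS' e].
  have dC : d \in C by apply: (subsetP sS).
  have dD : d \in desc C' by rewrite -dS; apply: desc_self.
  by have := hc d dC; rewrite dD e eqxx /= => /eqP <-.
- move=> hF; exfalso.
  have H : forall c, c \in C' -> forall i, exists2 d, d \in C & [&& d \in desc C', d i == c i & d != c].
    move=> c cC' i.
    case: (boolP [exists d in C, [&& d \in desc C', d i == c i & d != c]]) => [/exists_inP [d ? ?]|hd].
      by exists d.
    exfalso; move/negP: hF; apply; apply/exists_inP; exists c => //.
    apply/existsP; exists i; apply/forall_inP => d dC; apply/implyP => dD; apply/implyP => di.
    apply/negPn/negP => ne; move/negP: hd; apply; apply/exists_inP; exists d => //.
    by rewrite dD di ne.
  set J := [set j in R | f j \in desc C'].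
  have JR : J \subset R by apply/subsetP => j; rewrite inE => /andP [].
  apply: (negP (noBad J JR)).
  rewrite /badJ; apply/and4P; split.
  + have [c cC'] := card_gt0P c0.
    have /imsetP [j jR ej] : c \in C by apply: (subsetP sub).
    have [d dC /and3P [dD _ ne]] := H c cC' (Ordinal hn).
    have /imsetP [j' j'R ej'] := dC.
    apply/card_gt1P; exists j, j'; split.
    * by rewrite inE jR -ej desc_self.
    * by rewrite inE j'R -ej'.
    * by apply: contraNneq ne => e; rewrite ej' ej e.
  + have injJ : {in J &, injective f} by apply: sub_in2 inj => j; apply: (subsetP JR).
    rewrite -(card_in_imset injJ).
    apply: leq_trans hL; apply: leq_trans (desc_card ct).
    by apply: subset_leq_card; apply/subsetP => w /imsetP [j]; rewrite inE => /andP [_ h] ->.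
  + apply/forallP => i; apply: leq_trans ct.
    apply: leq_trans (leq_imset_card (fun w : word n q => w i) C').
    apply: subset_leq_card; apply/subsetP => x /imsetP [j]; rewrite inE => /andP [_ h] ->.
    by move: h; rewrite inE => /forallP /(_ i).
  + apply/forall_inP => j; rewrite inE => /andP [jR hj]; apply/forallP => i.
    move: (hj); rewrite inE => /forallP /(_ i) /imsetP [c cC' e].
    have cD : c \in desc C' by apply: desc_self.
    have /imsetP [j1 j1R e1] : c \in C by apply: (subsetP sub).
    case: (eqVneq (f j) c) => hfc.
    * have [d dC /and3P [dD di ne]] := H c cC' i.
      have /imsetP [j2 j2R e2] := dC.
      apply/exists_inP; exists j2; first by rewrite inE j2R -e2.
      rewrite -e2 e di andbT.
      by apply: contraNneq ne => ee; rewrite e2 ee hfc.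
    * apply/exists_inP; exists j1; first by rewrite inE j1R -e1.
      rewrite -e1 e eqxx andbT.
      by apply: contraNneq hfc => ee; rewrite e1 ee.
Qed.

Lemma code_exists n q t M : 1 <= t -> 2 <= t ^ n -> 0 < n -> 0 < q ->
  (2 * (t ^ n).+1 * (t.+1 ^ n * t ^ (n * t ^ n)) * M) ^ (2 * t - 1) <= q ^ (t * n) ->
  exists C : {set word n q}, is_MIPPC t C /\ M <= 2 * #|C|.
Proof.
move=> ht hL hn hq hX.
have [f hf] := exists_good_f ht hL hq hX.
set L := t ^ n in hL hf.
set B := [set J | badJ t L f J] in hf.
set D := \bigcup_(J in B) [set x | [pick j in J] == Some x].
have hD : #|D| <= #|B|.
  apply: leq_trans (card_bigcup_le _ _) _.
  rewrite -sum1_card; apply: leq_sum => J _.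
  case: pickP => [y hy|hn0].
  - apply: leq_trans (subset_leq_card (B := [set y]) _) _; last by rewrite cards1.
    by apply/subsetP => x; rewrite !inE => /eqP [->].
  - apply: leq_trans (subset_leq_card (B := set0) _) _; last by rewrite cards0.
    by apply/subsetP => x; rewrite !inE.
set R := ~: D.
have noBad : forall J : {set 'I_M}, J \subset R -> ~~ badJ t L f J.
  move=> J JR; apply/negP => bJ.
  have JB : J \in B by rewrite inE.
  case E: [pick j in J] => [x|].
  - have hx : x \in J by move: E; case: pickP => // y hy [<-].
    have xD : x \in D by apply/bigcupP; exists J => //; rewrite inE E.
    by move: (subsetP JR x hx); rewrite inE xD.
  - move: E; case: pickP => // hn0 _.
    have J0 : #|J| = 0 by apply/eqP; rewrite cards_eq0; apply/eqP/setP => j; rewrite inE; apply: hn0.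
    by move: bJ; rewrite /badJ J0.
have inj : {in R &, injective f}.
  move=> j j' jR j'R e; apply/eqP; apply/negPn/negP => ne.
  apply: (negP (noBad [set j; j'] _)).
    by apply/subsetP => k /set2P [] ->.
  rewrite /badJ cards2 ne /=; apply/and3P; split => //.
    apply/forallP => i; apply: leq_trans ht.
    rewrite -(cards1 (f j i)); apply: subset_leq_card; apply/subsetP => x /imsetP [k].
    by rewrite !inE => /orP [] /eqP -> ->; rewrite ?e.
  apply/forall_inP => k; rewrite !inE => /orP [] /eqP ->; apply/forallP => i; apply/exists_inP.
    by exists j'; [rewrite !inE eqxx orbT | rewrite eq_sym ne e eqxx].
  by exists j; [rewrite !inE eqxx | rewrite ne e eqxx].
exists (f @: R); split; first by apply: mippc_of hn (leqnn _) inj noBad.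
rewrite (card_in_imset inj).
have := cardsC D; rewrite card_ord.
move: hD hf; set a := #|D|; set b := #|B|; set r := #|~: D|.
move=> *; lia.
Qed.

Lemma choose_M E k Qt : 0 < k -> 0 < E ->
  exists M, (E * M) ^ k <= Qt /\ Qt < (E * M.+1) ^ k.
Proof.
move=> hk hE.
pose P := fun x => (E * x) ^ k <= Qt.
have exP : exists x, P x by exists 0; rewrite /P muln0 exp0n.
have ubP : forall x, P x -> x <= Qt.
  move=> x; rewrite /P => hx; apply: leq_trans hx.
  apply: (@leq_trans (E * x)); first by rewrite leq_pmull.
  case: (E * x) => [|y] //; rewrite -{1}(expn1 y.+1) leq_pexp2l //.
case: (ex_maxnP exP ubP) => M PM maxM.
exists M; split => //.
rewrite ltnNge; apply/negP => h; have := maxM _ h; lia.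
Qed.

Lemma INR_expn a b : INR (a ^ b) = pow (INR a) b.
Proof.
elim: b => [|b IH]; first by rewrite expn0.
by rewrite expnS -multE mult_INR IH.
Qed.

Lemma INR_leq a b : a <= b -> Rle (INR a) (INR b).
Proof. by move/leP; apply: le_INR. Qed.

Lemma INR_ltn a b : a < b -> Rlt (INR a) (INR b).
Proof. by move/ltP; apply: lt_INR. Qed.

Section RealPart.
Local Open Scope R_scope.

Lemma real_part (q E M Cc tn k : nat) : (0 < k)%N -> (k <= tn)%N -> (0 < E)%N -> (2 * E <= q)%N ->
  (q ^ tn < (E * M.+1) ^ k)%N -> (M <= 2 * Cc)%N ->
  Rle (Rmult (Rdiv 1 (Rmult 4 (INR E))) (Rpower (INR q) (Rdiv (INR tn) (INR k)))) (INR Cc).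
Proof.
move=> hk hkt hE hq hlt hM.
have eR : 0 < INR E by apply: (INR_ltn hE).
have kR : 0 < INR k by apply: (INR_ltn hk).
have qR : 2 * INR E <= INR q.
  have h2 : INR 2 = 2 by simpl; lra.
  by have := INR_leq hq; rewrite -multE mult_INR h2.
have e1 : 1 <= INR E by have := INR_leq hE.
have q1 : 1 <= INR q by lra.
have q0 : 0 < INR q by lra.
set a := INR tn / INR k.
set x := Rpower (INR q) a.
have a1 : 1 <= a.
  have hkt' := INR_leq hkt.
  have e : INR tn / INR k - 1 = (INR tn - INR k) / INR k by field; lra.
  have : 0 <= (INR tn - INR k) / INR k by apply: Rle_mult_inv_pos; lra.
  rewrite /a; lra.
have xq : INR q <= x by rewrite /x -{1}(Rpower_1 _ q0); apply: Rle_Rpower.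
have xk : pow x k = pow (INR q) tn.
  rewrite /x -Rpower_pow; last by apply: exp_pos.
  rewrite Rpower_mult -Rpower_pow // /a; congr Rpower; field; lra.
have hlt' := INR_ltn hlt.
rewrite !INR_expn -multE mult_INR -xk in hlt'.
have xlt : x < INR E * INR M.+1.
  apply: Rnot_le_lt => hle.
  have : pow (INR E * INR M.+1) k <= pow x k by apply: pow_incr; split => //; apply: Rmult_le_pos; apply: pos_INR.
  lra.
have hM' := INR_leq hM.
rewrite -multE mult_INR in hM'.
have h2 : INR 2 = 2 by simpl; lra.
rewrite h2 S_INR in hM' xlt.
have main : x <= 4 * INR E * INR Cc by nra.
apply: (Rmult_le_reg_l (4 * INR E)); first lra.
rewrite -Rmult_assoc.
have -> : 4 * INR E * (1 / (4 * INR E)) = 1 by field; lra.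
lra.
Qed.

End RealPart.

Unset Implicit Arguments.

Theorem theorem5 (n t : nat) (hn : 2 <= n) (ht : 2 <= t) :
  exists c : R, Rlt 0 c /\
    exists q0 : nat, forall q : nat, q0 <= q ->
      exists C : {set word n q},
        is_MIPPC t C /\
        Rle (Rmult c (Rpower (INR q) (Rdiv (INR (t * n)) (INR (2 * t - 1)))))
            (INR #|C|).
Proof.
set E := 2 * (t ^ n).+1 * (t.+1 ^ n * t ^ (n * t ^ n)).
have hE : 0 < E by rewrite /E !muln_gt0 !expn_gt0; lia.
have hER : Rlt 0 (INR E) by apply: (INR_ltn hE).
exists (Rdiv 1 (Rmult 4 (INR E))); split.
  apply: Rdiv_lt_0_compat; lra.
exists (2 * E) => q hq.
have q0 : 0 < q by lia.
have hk : 0 < 2 * t - 1 by lia.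
have [M [hM1 hM2]] := choose_M (q ^ (t * n)) hk hE.
have ht1 : 1 <= t by lia.
have hn0 : 0 < n by lia.
have htn : 2 <= t ^ n.
  apply: (@leq_trans (2 ^ n)); last by apply: expn_mono.
  by apply: (@leq_trans (2 ^ 1)); rewrite // leq_pexp2l.
have [C [hC hMC]] := code_exists ht1 htn hn0 q0 hM1.
exists C; split => //.
apply: (real_part (M := M)) => //.
by rewrite mulnC; nia.
Qed.
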